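(* Let $n\ge3$ and $(R,\Lambda)$ a form ring. Then the elementary unitary group $EU_{2n}(R,\Lambda)$ is normally generated by the subgroup $H(A_{n+1})$, where $A_{n+1}<E_n(R)$ is the subgroup of Lemma 5.2 and $H:\mathrm{GL}_n(R)\to U_{2n}(R,\Lambda)$, $H(X)=\mathrm{diag}(X,(X^{-1})^* )$, is the hyperbolic homomorphism.
   Context: Form ring $(R,\Lambda)$: $R$ has an anti-automorphism $x\mapsto x^*$ with $x^{**}=\varepsilon x\varepsilon^*$ for a unit $\varepsilon$, $\varepsilon^*=\varepsilon^{-1}$, and $\Lambda$ is an additive subgroup with $r^*\Lambda r\subset\Lambda$ and $\{x-x^*\varepsilon\mid x\in R\}\subset\Lambda\subset\{x\mid x=-x^*\varepsilon\}$; $(x_{ij})^*=(x_{ji}^* )$. $U_{2n}(R,\Lambda)=\{\begin{pmatrix}\alpha&\beta\\ \gamma&\delta\end{pmatrix}\in\mathrm{GL}_{2n}(R)\mid\alpha^*\delta+\gamma^*\varepsilon\beta=I_n,\ \alpha^*\gamma,\beta^*\delta\in\Lambda_n\}$ with $\Lambda_n=\{(a_{ij})\mid a_{ij}=-a_{ji}^*\varepsilon\ (i\ne j),\ a_{ii}\in\Lambda\}$; $EU_{2n}(R,\Lambda)$ is its elementary subgroup (Hahn–O'Meara), containing $H(E_n(R))$. $E_n(R)$ is generated by elementary matrices $e_{ij}(r)$. The subgroup $A_{n+1}<E_n(R)$ is the image of the even permutations in the group $S_{n+1}<\mathrm{SAut}(F_n)$ generated by $\sigma_{ij}$ (swap $a_i,a_j$)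 and $\sigma_{i,n+1}$ ($a_i\mapsto a_i^{-1}$, $a_j\mapsto a_ja_i^{-1}$) under $\mathrm{SAut}(F_n)\to\mathrm{SL}_n(\mathbb{Z})\to E_n(R)$. *)

(* Defs.v *)
From HB Require Import structures.
From mathcomp Require Import all_boot all_order all_algebra.
Set Implicit Arguments. Unset Strict Implicit. Unset Printing Implicit Defensive.
Import GRing.Theory.
Local Open Scope ring_scope.

Record is_form_ring (R : pzRingType) (star : R -> R) (eps epsi : R)
    (Lam : R -> Prop) : Prop := {
  fr_starD : forall x y, star (x + y) = star x + star y;
  fr_starM : forall x y, star (x * y) = star y * star x;
  fr_star1 : star 1 = 1;
  fr_star_bij : bijective star;
  fr_epsK : eps * epsi = 1 /\ epsi * eps = 1;
  fr_star_eps : star eps = epsi;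
  fr_starK : forall x, star (star x) = eps * x * star eps;
  fr_Lam0 : Lam 0;
  fr_LamB : forall x y, Lam x -> Lam y -> Lam (x - y);
  fr_Lam_conj : forall r x, Lam x -> Lam (star r * x * r);
  fr_Lam_min : forall x, Lam (x - star x * eps);
  fr_Lam_max : forall x, Lam x -> x = - (star x * eps) }.

Definition star_mx (R : pzRingType) (star : R -> R) m n (X : 'M[R]_(m, n))
  : 'M[R]_(n, m) := \matrix_(i, j) star (X j i).

Definition in_Lam_n (R : pzRingType) (star : R -> R) (eps : R)
    (Lam : R -> Prop) n (A : 'M[R]_n) : Prop :=
  (forall i j, i != j -> A i j = - (star (A j i) * eps)) /\
  (forall i, Lam (A i i)).

(* two-sided invertibility (R need not be commutative) *)
Definition mx_invertible (R : pzRingType) n (M : 'M[R]_n) : Prop :=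
  exists N : 'M[R]_n, M *m N = 1%:M /\ N *m M = 1%:M.

Definition in_U (R : pzRingType) (star : R -> R) (eps : R) (Lam : R -> Prop)
    n (M : 'M[R]_(n + n)) : Prop :=
  let a := ulsubmx M in let b := ursubmx M in
  let c := dlsubmx M in let d := drsubmx M in
  [/\ mx_invertible M,
      star_mx star a *m d + star_mx star c *m (eps *: b) = 1%:M,
      in_Lam_n star eps Lam (star_mx star a *m c) &
      in_Lam_n star eps Lam (star_mx star b *m d)].

Inductive mx_gen (R : pzRingType) m (S : 'M[R]_m -> Prop) : 'M[R]_m -> Prop :=
  | mx_gen1 : mx_gen S 1%:M
  | mx_genS M : S M -> mx_gen S M
  | mx_genM M N : mx_gen S M -> mx_gen S N -> mx_gen S (M *m N)
  | mx_genV M N : mx_gen S M -> M *m N = 1%:M -> N *m M = 1%:M -> mx_gen S N.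

Definition elem_mx (R : pzRingType) n (i j : 'I_n) (r : R) : 'M[R]_n :=
  1%:M + r *: delta_mx i j.

Definition in_E (R : pzRingType) n : 'M[R]_n -> Prop :=
  mx_gen (fun X => exists i j r, i != j /\ X = elem_mx i j r).

(* Hyperbolic map H(X) = diag(X, (X^{-1})^* ), with Y the inverse of X *)
Definition hyp_mx (R : pzRingType) (star : R -> R) n (X Y : 'M[R]_n)
  : 'M[R]_(n + n) := block_mx X 0 0 (star_mx star Y).

Definition in_H_of (R : pzRingType) (star : R -> R) n
    (P : 'M[R]_n -> Prop) (M : 'M[R]_(n + n)) : Prop :=
  exists X Y, [/\ P X, X *m Y = 1%:M, Y *m X = 1%:M & M = hyp_mx star X Y].

(* EU_{2n}(R,Lambda) (Hahn--O'Meara): generated by H(E_n(R)) and the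
   unitary matrices [[I, b],[0, I]] and [[I, 0],[c, I]]. *)
Definition in_EU (R : pzRingType) (star : R -> R) (eps : R) (Lam : R -> Prop)
    n : 'M[R]_(n + n) -> Prop :=
  mx_gen (fun M =>
    in_H_of star (@in_E R n) M \/
    (in_U star eps Lam M /\
     ((exists b, M = block_mx 1%:M b 0 1%:M) \/
      (exists c, M = block_mx 1%:M 0 c 1%:M)))).

(* Image in E_n(R) of sigma_{i,n+1}: a_i -> a_i^{-1}, a_j -> a_j a_i^{-1};
   column c is the abelianized image of a_c. *)
Definition sigma_last_mx (R : pzRingType) n (i : 'I_n) : 'M[R]_n :=
  \matrix_(r, c) (((r == c) && (c != i))%:R - (r == i)%:R).

(* images of the transposition generators sigma_ij of S_{n+1} *)
Definition sigma_gen (R : pzRingType) n (X : 'M[R]_n) : Prop :=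
  (exists i j : 'I_n, i != j /\ X = @tperm_mx R n i j) \/
  (exists i : 'I_n, X = @sigma_last_mx R n i).

(* A_{n+1}: image of the even permutations = products of an even number
   of transpositions sigma_ij *)
Definition in_A (R : pzRingType) n (X : 'M[R]_n) : Prop :=
  exists s : seq 'M[R]_n,
    [/\ (forall Y, Y \in s -> sigma_gen Y), ~~ odd (size s) &
        X = foldr (fun A B => A *m B) 1%:M s].

Definition normal_closure_in (R : pzRingType) m (G S : 'M[R]_m -> Prop)
  : 'M[R]_m -> Prop :=
  mx_gen (fun M => exists g g' h,
    [/\ G g, g *m g' = 1%:M, g' *m g = 1%:M, S h & M = g *m h *m g']).

(* Main.v *)
Require Import Defs.
From HB Require Import structures.
From mathcomp Require Import all_boot all_order all_algebra.
From mathcomp Require Import perm.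
Set Implicit Arguments. Unset Strict Implicit. Unset Printing Implicit Defensive.
Import GRing.Theory.
Local Open Scope ring_scope.

Definition E (R : pzRingType) (n : nat) (a : R) (p q : 'I_n) : 'M[R]_n :=
  \matrix_(x, y) if (x == p) && (y == q) then a else 0.

Lemma neq_symF (T : eqType) (a b : T) : a != b -> (b == a) = false.
Proof. by rewrite eq_sym => /negbTE. Qed.


Ltac dec := repeat first
 [ progress rewrite ?eqxx /=
 | match goal with
   | H : is_true (?a != ?a) |- _ => by rewrite eqxx in H
   | H : is_true (~~ _) |- _ => progress rewrite ?(negbTE H) /=
   | H : is_true (~~ _) |- _ => progress rewrite ?(neq_symF H) /=
   end ].

Ltac ent_split := repeat (dec; match goal with |- context [?x == ?p] =>
   case: (eqVneq x p) => [?|?]; [subst x|] end); dec.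

Ltac simpR := rewrite ?(subrr, addr0, add0r, subr0, sub0r, mulr0, mul0r, mulr1, mul1r, mulr1n, mulr0n, oppr0, opprK, andbF, andbT, mulrN, mulNr).

Ltac fin := try done; try (by rewrite addrC); try (by rewrite ?addrA ?(addNr, subrr, add0r, addr0, addrK, addrNK, subrK, addKr, addNKr));
  try (by rewrite ?addrA ?(addNr, subrr, add0r, addr0, addrK, addrNK, subrK, addKr, addNKr) addrC).

Ltac Eent := apply/matrixP => x y; rewrite /E ?mxE; ent_split; simpR; fin.

Definition el (R : pzRingType) (n : nat) (p q : 'I_n) (a : R) : 'M[R]_n := 1%:M + E a p q.

Section Ecalc.
Variables (R : pzRingType) (n : nat).
Implicit Types (a b : R) (p q s t : 'I_n) (A B : 'M[R]_n).


Lemma mulE a b p q s t :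
  E a p q *m E b s t = if q == s then E (a * b) p t else 0.
Proof.
apply/matrixP => x y; rewrite !mxE (bigD1 q) //= big1 ?addr0; last first.
  by move=> k /negbTE kq; rewrite mxE kq andbF mul0r.
rewrite !mxE eqxx andbT; case: (eqVneq q s) => [?|nqs]; [subst s|]; rewrite ?mxE ?eqxx.
  by case: (x == p); case: (y == t); rewrite /= ?mulr0 ?mul0r.
by rewrite /= mulr0.
Qed.

Lemma mulE_eq a b p q t : E a p q *m E b q t = E (a * b) p t.
Proof. by rewrite mulE eqxx. Qed.
Lemma mulE_neq a b p q s t : q != s -> E a p q *m E b s t = 0.
Proof. by move=> h; rewrite mulE (negbTE h). Qed.

Lemma E0 p q : E (0 : R) p q = 0.
Proof. by apply/matrixP => x y; rewrite !mxE; case: ifP. Qed.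
Lemma ED a b p q : E (a + b) p q = E a p q + E b p q.
Proof. by apply/matrixP => x y; rewrite !mxE; case: ifP; rewrite ?addr0. Qed.
Lemma EN a p q : E (- a) p q = - E a p q.
Proof. by apply/matrixP => x y; rewrite !mxE; case: ifP; rewrite ?oppr0. Qed.


Lemma elemE p q a : elem_mx p q a = el p q a.
Proof.
apply/matrixP => x y; rewrite /el /elem_mx !mxE.
by case: (_ && _); rewrite ?mulr1 ?mulr0.
Qed.

Lemma el_mul_same p q a b : p != q -> el p q a *m el p q b = el p q (a + b).
Proof.
move=> h; rewrite /el mulmxDl !mulmxDr !mul1mx mulmx1 mulE_neq 1?eq_sym //.
by rewrite addr0 ED addrA; Eent.
Qed.

Lemma el0 p q : el p q (0 : R) = 1%:M.
Proof. by rewrite /el E0 addr0. Qed.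

Lemma el_inv p q a : p != q -> el p q a *m el p q (- a) = 1%:M /\ el p q (- a) *m el p q a = 1%:M.
Proof. by move=> h; rewrite !el_mul_same // subrr addNr el0. Qed.

Lemma el_prod p q s t a b : q != s -> el p q a *m el s t b = 1%:M + E a p q + E b s t.
Proof.
move=> h; rewrite /el mulmxDl !mulmxDr !mul1mx mulmx1 mulE_neq //.
by rewrite addr0; Eent.
Qed.

End Ecalc.

Ltac Eexp := rewrite /el; repeat (progress rewrite ?(mulmxDl, mulmxDr, mul1mx, mulmx1, mulE, mul0mx, mulmx0, mulNmx, mulmxN, addr0, add0r); dec).

Section Tst.
Variables (R : pzRingType) (n : nat).
Lemma S1 (i j k : 'I_n) (u s : R) : i != j -> j != k -> i != k ->
  el k i u *m el i j s = el i j s *m el k j (u*s) *m el k i u.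
Proof. move=> hij hjk hik. Eexp. Eent. Qed.

Lemma H2 (i j k : 'I_n) (r : R) : i != j -> j != k -> i != k ->
  el i j 1 *m (el i j r *m el k i (-r)) *m el i j (-1) *m (el k i r *m el i j (-r)) = el k j r.
Proof. move=> hij hjk hik. Eexp. Eent. Qed.
End Tst.

Section Perm.
Variables (R : pzRingType) (n : nat).
Implicit Types (a b : 'I_n) (c : R).

Lemma tpE a b z : tperm a b z = if z == a then b else if z == b then a else z.
Proof.
case: tpermP => [->|->|/eqP h1 /eqP h2]; rewrite ?eqxx //.
  by case: eqP => // ->.
by rewrite (negbTE h1) (negbTE h2).
Qed.

Lemma tpm_entry a b x y : (tperm_mx a b : 'M[R]_n) x y = (tperm a b x == y)%:R.
Proof. by rewrite /tperm_mx /perm_mx /row_perm !mxE. Qed.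

Lemma tpm_eq a b x p : (tperm a b x == p) = (x == tperm a b p).
Proof. by rewrite -{1}(tpermK a b p) (inj_eq perm_inj). Qed.

Lemma tpmE a b c p q : tperm_mx a b *m E c p q = E c (tperm a b p) q.
Proof.
rewrite /tperm_mx -row_permE; apply/matrixP => x y; rewrite !mxE.
by rewrite tpm_eq.
Qed.

Lemma Etpm a b c p q : E c p q *m tperm_mx a b = E c p (tperm a b q).
Proof.
rewrite /tperm_mx; have := col_permE (tperm a b) (E c p q); rewrite tpermV => <-.
apply/matrixP => x y; rewrite !mxE.
by rewrite tpm_eq.
Qed.

Lemma tpm2 a b : tperm_mx a b *m tperm_mx a b = 1%:M :> 'M[R]_n.
Proof. by rewrite /tperm_mx -perm_mxM tperm2 perm_mx1. Qed.

Lemma H1 (i j k : 'I_n) c : i != j -> j != k -> i != k ->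
  (tperm_mx j k *m tperm_mx i j) *m el i j c *m (tperm_mx i j *m tperm_mx j k)
  = el k i c.
Proof.
move=> hij hjk hik.
rewrite /el mulmxDr mulmxDl mulmx1 -mulmxA (mulmxA (tperm_mx i j)) tpm2 mul1mx tpm2.
rewrite -(mulmxA (tperm_mx j k)) tpmE tpmE mulmxA Etpm Etpm.
rewrite tpermL tpermR tpermL tpermD //.
all: by rewrite eq_sym.
Qed.

End Perm.

Section AE.
Variables (R : pzRingType) (n : nat).
Implicit Types (a b : 'I_n) (c : R) (A B : 'M[R]_n).
Local Notation inE := (@in_E R n).

Lemma inE_el p q c : p != q -> inE (el p q c).
Proof. by move=> h; apply: mx_genS; exists p, q, c; rewrite elemE. Qed.

Lemma inE_mul A B : inE A -> inE B -> inE (A *m B).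
Proof. exact: mx_genM. Qed.
Lemma inE_1 : inE 1%:M.
Proof. exact: mx_gen1. Qed.
Lemma inE_V A B : inE A -> A *m B = 1%:M -> B *m A = 1%:M -> inE B.
Proof. exact: mx_genV. Qed.

Lemma mulmxE_entry A c p q x y : (A *m E c p q) x y = if y == q then A x p * c else 0.
Proof.
rewrite !mxE (bigD1 p) //= big1 ?addr0; last first.
  by move=> k /negbTE kq; rewrite mxE kq /= mulr0.
by rewrite mxE eqxx /=; case: (y == q); rewrite ?mulr0.
Qed.

Lemma mulEmx_entry A c p q x y : (E c p q *m A) x y = if x == p then c * A q y else 0.
Proof.
rewrite !mxE (bigD1 q) //= big1 ?addr0; last first.
  by move=> k /negbTE kq; rewrite mxE kq andbF mul0r.
by rewrite mxE eqxx andbT; case: (x == p); rewrite ?mul0r.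
Qed.

Definition Dg a : 'M[R]_n := \matrix_(x, y) if x == y then (if x == a then -1 else 1) else 0.

Lemma mulDg A a : A *m Dg a = \matrix_(x, y) (A x y * (if y == a then -1 else 1)).
Proof.
apply/matrixP => x y; rewrite !mxE (bigD1 y) //= big1 ?addr0; last first.
  by move=> k /negbTE kq; rewrite mxE kq mulr0.
by rewrite mxE eqxx.
Qed.

Lemma Dgmul a A : Dg a *m A = \matrix_(x, y) ((if x == a then -1 else 1) * A x y).
Proof.
apply/matrixP => x y; rewrite !mxE (bigD1 x) //= big1 ?addr0; last first.
  by move=> k /negbTE kq; rewrite mxE eq_sym kq mul0r.
by rewrite mxE eqxx.
Qed.

Lemma DgDg a : Dg a *m Dg a = 1%:M.
Proof.
rewrite Dgmul; apply/matrixP => x y; rewrite !mxE; ent_split; simpR; rewrite ?mulrNN ?mulr1 //.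
Qed.

Lemma Dg_el a p q c : p != q ->
  Dg a *m el p q c *m Dg a = el p q (if (p == a) || (q == a) then - c else c).
Proof.
move=> hpq; rewrite mulDg Dgmul /el; apply/matrixP => x y; rewrite /E !mxE; ent_split; simpR;
 rewrite ?mulrNN ?mulr1 ?mulN1r ?mulrN1 ?opprK //.
Qed.


Definition W a b : 'M[R]_n := el a b 1 *m el b a (-1) *m el a b 1.

Lemma WE a b : a != b -> W a b = 1%:M + E 1 a b - E 1 b a - E 1 a a - E 1 b b.
Proof. move=> h; rewrite /W; Eexp; Eent. Qed.

Lemma tperm_W a b : a != b -> tperm_mx a b = W a b *m Dg a.
Proof.
move=> h; rewrite WE // mulDg; apply/matrixP => x y; rewrite tpm_entry tpE /E !mxE.
ent_split; simpR; rewrite ?mulrNN ?mulr1 //.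
Qed.

Lemma tDgt a b : tperm_mx a b *m Dg a *m tperm_mx a b = Dg b :> 'M[R]_n.
Proof.
rewrite /tperm_mx -row_permE; have := col_permE (tperm a b) (row_perm (tperm a b) (Dg a)).
rewrite tpermV => <-; apply/matrixP => x y; rewrite !mxE.
rewrite (inj_eq perm_inj) tpm_eq tpermL.
by case: (x == y).
Qed.

Lemma inE_DgDg a b : inE (Dg a *m Dg b).
Proof.
case: (eqVneq a b) => [<-|h]; first by rewrite DgDg; apply: inE_1.
have hba : b != a by rewrite eq_sym.
have -> : Dg a *m Dg b = W b a *m W b a.
  have hW : W b a = tperm_mx b a *m Dg b by rewrite tperm_W // -mulmxA DgDg mulmx1.
  by rewrite hW mulmxA tDgt.
have hW : inE (W b a) by rewrite /W; apply: inE_mul; [apply: inE_mul|]; apply: inE_el.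
exact: inE_mul.
Qed.

Lemma inE_conjDg a F : inE F -> inE (Dg a *m F *m Dg a).
Proof.
elim=> [|M [p [q [c [hpq ->]]]]|M N _ IH1 _ IH2|M N _ IH h1 h2].
- by rewrite mulmx1 DgDg; apply: inE_1.
- by rewrite elemE Dg_el //; apply: inE_el.
- have -> : Dg a *m (M *m N) *m Dg a = (Dg a *m M *m Dg a) *m (Dg a *m N *m Dg a).
    by rewrite -!mulmxA (mulmxA (Dg a) (Dg a)) DgDg mul1mx.
  exact: inE_mul.
- apply: (inE_V IH).
    by rewrite -!mulmxA (mulmxA (Dg a) (Dg a)) DgDg mul1mx (mulmxA M) h1 mul1mx DgDg.
  by rewrite -!mulmxA (mulmxA (Dg a) (Dg a)) DgDg mul1mx (mulmxA N) h2 mul1mx DgDg.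
Qed.


Definition Gs i (s : seq 'I_n) : 'M[R]_n :=
  \matrix_(x, y) ((x == y)%:R - ((x == i) && (y \in s))%:R).

Lemma Gs_E i s : uniq s -> i \notin s -> inE (Gs i s).
Proof.
elim: s => [|c s IH] /=.
  move=> _ _; have -> : Gs i [::] = 1%:M.
    by apply/matrixP=> x y; rewrite !mxE in_nil andbF subr0.
  exact: inE_1.
move=> /andP [cs us]; rewrite in_cons negb_or => /andP [ic iS].
have -> : Gs i (c :: s) = Gs i s *m el i c (-1).
  apply/matrixP => x y; rewrite /el mulmxDr mulmx1 [in RHS]mxE mulmxE_entry !mxE in_cons.
  ent_split; simpR; try (case: (y \in s); simpR); rewrite ?mulrN1 ?mulr1 //.
apply: inE_mul; [exact: IH | exact: inE_el].
Qed.

Definition Fi i := Gs i (filter (fun y => y != i) (enum 'I_n)).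

Lemma sigma_F (i : 'I_n) : @sigma_last_mx R n i = Fi i *m Dg i.
Proof.
rewrite mulDg; apply/matrixP => x y; rewrite !mxE mem_filter mem_enum andbT.
ent_split; simpR; rewrite ?mulrN1 ?mulr1 ?opprK //.
Qed.

Lemma gen_decomp g : sigma_gen g -> exists F a, inE F /\ g = F *m Dg a.
Proof.
case=> [[i [j [hij ->]]]|[i ->]].
  exists (W i j), i; split; last exact: tperm_W.
  by rewrite /W; apply: inE_mul; [apply: inE_mul|]; apply: inE_el; rewrite // eq_sym.
exists (Fi i), i; split; last exact: sigma_F.
apply: Gs_E; first by rewrite filter_uniq // enum_uniq.
by rewrite mem_filter eqxx.
Qed.

Lemma pair_E g1 g2 : sigma_gen g1 -> sigma_gen g2 -> inE (g1 *m g2).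
Proof.
move=> /gen_decomp [F1 [a [h1 ->]]] /gen_decomp [F2 [b [h2 ->]]].
have -> : F1 *m Dg a *m (F2 *m Dg b) = F1 *m (Dg a *m F2 *m Dg a) *m (Dg a *m Dg b).
  by rewrite -!mulmxA (mulmxA (Dg a) (Dg a)) DgDg mul1mx.
apply: inE_mul; [apply: inE_mul; [exact: h1 | exact: inE_conjDg] | exact: inE_DgDg].
Qed.

Lemma inA_E X : in_A X -> inE X.
Proof.
case=> s [hs hodd ->].
have : size s = (size s)./2.*2 by rewrite -{1}(odd_double_half (size s)) (negbTE hodd).
move: (size s)./2 => k; elim: k s hs {hodd} => [|k IH] [|g1 [|g2 s]] //= hs.
- move=> _; exact: inE_1.
- move=> [] hk.
  rewrite mulmxA; apply: inE_mul.
    by apply: pair_E; apply: hs; rewrite !in_cons eqxx ?orbT.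
  by apply: IH => // Y hY; apply: hs; rewrite !in_cons hY !orbT.
Qed.

End AE.

Section Dec.
Variables (R : pzRingType) (n : nat).
Implicit Types (b : 'M[R]_n).

Lemma bsum b : b = \sum_p \sum_q E (b p q) p q.
Proof.
apply/matrixP => x y; rewrite summxE.
under eq_bigr do rewrite summxE.
rewrite (bigD1 x) //= [X in _ + X]big1 => [|p hp].
  rewrite (bigD1 y) //= big1 => [|q hq].
    by rewrite !mxE !eqxx /= !addr0.
  by rewrite mxE eqxx eq_sym (negbTE hq).
by rewrite big1 // => q _; rewrite mxE eq_sym (negbTE hp).
Qed.

Definition T b (p q : 'I_n) : 'M[R]_n :=
  if (p < q)%N then E (b p q) p q + E (b q p) q p
  else if p == q then E (b p p) p p else 0.

Lemma Tsum b : b = \sum_p \sum_q T b p q.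
Proof.
pose A (p q : 'I_n) := if (p < q)%N then E (b p q) p q else 0.
pose B (p q : 'I_n) := if p == q then E (b p q) p q else 0.
pose C (p q : 'I_n) := if (q < p)%N then E (b p q) p q else 0.
pose C' (p q : 'I_n) := if (p < q)%N then E (b q p) q p else 0.
have L1 : \sum_p \sum_q E (b p q) p q =
   \sum_p \sum_q A p q + \sum_p \sum_q B p q + \sum_p \sum_q C p q.
  rewrite -!big_split /=; apply: eq_bigr => p _; rewrite -!big_split /=.
  apply: eq_bigr => q _; rewrite /A /B /C -val_eqE.
  case: (ltngtP p q) => h; rewrite ?addr0 ?add0r //.
have L2 : \sum_p \sum_q T b p q =
   \sum_p \sum_q A p q + \sum_p \sum_q B p q + \sum_p \sum_q C' p q.
  rewrite -!big_split /=; apply: eq_bigr => p _; rewrite -!big_split /=.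
  apply: eq_bigr => q _; rewrite /A /B /C' /T -val_eqE.
  case: (ltngtP p q) => h; rewrite ?addr0 ?add0r //.
  by have e := ord_inj h; subst q.
have L3 : \sum_p \sum_q C p q = \sum_p \sum_q C' p q by rewrite exchange_big.
by rewrite {1}[b]bsum L1 L2 L3.
Qed.

End Dec.

Section Main.
Variables (R : pzRingType) (star : R -> R) (eps epsi : R) (Lam : R -> Prop) (n : nat).
Hypothesis fr : is_form_ring star eps epsi Lam.
Hypothesis hn : (3 <= n)%N.
Local Notation EU := (@in_EU R star eps Lam n).
Local Notation NC := (normal_closure_in (@in_EU R star eps Lam n) (in_H_of star (@in_A R n))).
Local Notation sm := (star_mx star).
Local Notation inEn := (@in_E R n).

Lemma starD x y : star (x + y) = star x + star y. Proof. exact: (fr_starD fr x y). Qed.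
Lemma starM x y : star (x * y) = star y * star x. Proof. exact: (fr_starM fr x y). Qed.
Lemma star1 : star 1 = 1. Proof. exact: fr_star1 fr. Qed.
Lemma star0 : star 0 = 0.
Proof. by apply: (addrI (star 0)); rewrite -starD !addr0. Qed.
Lemma starN x : star (- x) = - star x.
Proof. by apply: (addrI (star x)); rewrite -starD !subrr star0. Qed.
Lemma eps_epsi : eps * epsi = 1. Proof. by case: (fr_epsK fr). Qed.
Lemma epsi_eps : epsi * eps = 1. Proof. by case: (fr_epsK fr). Qed.
Lemma star_eps : star eps = epsi. Proof. exact: fr_star_eps fr. Qed.
Lemma starK x : star (star x) = eps * x * epsi.
Proof. by rewrite (fr_starK fr) star_eps. Qed.
Lemma star_epsi : star epsi = eps.
Proof. by rewrite -star_eps starK -mulrA eps_epsi mulr1. Qed.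

Lemma star_sum m (F : 'I_m -> R) : star (\sum_i F i) = \sum_i star (F i).
Proof. exact: (big_morph star starD star0). Qed.

Lemma sm_entry m k (A : 'M[R]_(m, k)) i j : sm A i j = star (A j i).
Proof. by rewrite mxE. Qed.

Lemma smM m k l (A : 'M[R]_(m, k)) (B : 'M[R]_(k, l)) : sm (A *m B) = sm B *m sm A.
Proof.
apply/matrixP => i j; rewrite !mxE star_sum; apply: eq_bigr => t _.
by rewrite !mxE starM.
Qed.

Lemma sm1 : sm (1%:M : 'M[R]_n) = 1%:M.
Proof.
apply/matrixP => i j; rewrite !mxE; case: (eqVneq i j) => [e|h].
  by subst j; rewrite /= ?eqxx /= mulr1n star1.
by rewrite /= ?(negbTE h) ?(neq_symF h) /= mulr0n star0.
Qed.

Lemma sm0 m k : sm (0 : 'M[R]_(m, k)) = 0.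
Proof. by apply/matrixP => i j; rewrite !mxE star0. Qed.

Lemma smD m k (A B : 'M[R]_(m, k)) : sm (A + B) = sm A + sm B.
Proof. by apply/matrixP => i j; rewrite !mxE starD. Qed.

Lemma smN m k (A : 'M[R]_(m, k)) : sm (- A) = - sm A.
Proof. by apply/matrixP => i j; rewrite !mxE starN. Qed.

Lemma smE a (p q : 'I_n) : sm (E a p q) = E (star a) q p.
Proof. by apply/matrixP => i j; rewrite !mxE andbC; case: (_ && _); rewrite ?star0. Qed.

Lemma sm_el (p q : 'I_n) a : sm (el p q a) = 1%:M + E (star a) q p.
Proof. by rewrite /el smD sm1 smE. Qed.

Definition Hm (X Y : 'M[R]_n) : 'M[R]_(n + n) := hyp_mx star X Y.
Definition U (b : 'M[R]_n) : 'M[R]_(n + n) := block_mx 1%:M b 0 1%:M.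
Definition L (c : 'M[R]_n) : 'M[R]_(n + n) := block_mx 1%:M 0 c 1%:M.

Lemma HmM X Y X' Y' : Hm X Y *m Hm X' Y' = Hm (X *m X') (Y' *m Y).
Proof.
rewrite /Hm /hyp_mx mulmx_block !mulmx0 !mul0mx !addr0 add0r smM.
by [].
Qed.

Lemma Hm1 : Hm 1%:M 1%:M = 1%:M.
Proof. by rewrite /Hm /hyp_mx sm1 -scalar_mx_block. Qed.

Lemma UU b b' : U b *m U b' = U (b + b').
Proof.
by rewrite /U mulmx_block !mulmx0 !mul0mx !mul1mx !mulmx1 !addr0 add0r addrC.
Qed.

Lemma LL c c' : L c *m L c' = L (c + c').
Proof.
by rewrite /L mulmx_block !mulmx0 !mul0mx !mul1mx !mulmx1 !addr0 add0r.
Qed.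

Lemma U0 : U 0 = 1%:M. Proof. by rewrite /U -scalar_mx_block. Qed.
Lemma L0 : L 0 = 1%:M. Proof. by rewrite /L -scalar_mx_block. Qed.

Lemma HUH X Y b : X *m Y = 1%:M ->
  Hm X Y *m U b *m Hm Y X = U (X *m b *m sm X).
Proof.
move=> h; rewrite /Hm /hyp_mx /U !mulmx_block !mulmx0 !mul0mx !mulmx1 !addr0 !add0r.
by rewrite ?mul0mx ?mulmx1 h -smM h sm1.
Qed.

Lemma HLH X Y c : X *m Y = 1%:M ->
  Hm X Y *m L c *m Hm Y X = L (sm Y *m c *m Y).
Proof.
move=> h; rewrite /Hm /hyp_mx /L !mulmx_block !mulmx0 !mul0mx !mulmx1 !addr0 !add0r.
by rewrite ?mul0mx h -smM h sm1.
Qed.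


Definition inv2 m (A B : 'M[R]_m) := A *m B = 1%:M /\ B *m A = 1%:M.

Lemma inv2_sym m (A B : 'M[R]_m) : inv2 A B -> inv2 B A.
Proof. by case. Qed.

Lemma inv2M m (A B C D : 'M[R]_m) : inv2 A B -> inv2 C D -> inv2 (A *m C) (D *m B).
Proof.
move=> [h1 h2] [h3 h4]; split.
  by rewrite !mulmxA -(mulmxA A C D) h3 mulmx1 h1.
by rewrite !mulmxA -(mulmxA D B A) h2 mulmx1 h4.
Qed.

Lemma inv2_uniq m (A B B' : 'M[R]_m) : inv2 A B -> inv2 A B' -> B = B'.
Proof.
move=> [h1 h2] [h3 h4].
by rewrite -[B]mulmx1 -h3 mulmxA h2 mul1mx.
Qed.

Lemma inv2_el (p q : 'I_n) a : p != q -> inv2 (el p q a) (el p q (- a)).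
Proof. exact: el_inv. Qed.

Lemma Hm_inv X Y : inv2 X Y -> inv2 (Hm X Y) (Hm Y X).
Proof. by move=> [h1 h2]; split; rewrite HmM ?h1 ?h2 Hm1. Qed.

Lemma U_inv b : inv2 (U b) (U (- b)).
Proof. by split; rewrite UU ?subrr ?addNr U0. Qed.

Lemma L_inv c : inv2 (L c) (L (- c)).
Proof. by split; rewrite LL ?subrr ?addNr L0. Qed.

Lemma EU_mul A B : EU A -> EU B -> EU (A *m B). Proof. exact: mx_genM. Qed.
Lemma EU_1 : EU 1%:M. Proof. exact: mx_gen1. Qed.
Lemma EU_V A B : EU A -> inv2 A B -> EU B.
Proof. by move=> h [h1 h2]; apply: (mx_genV h). Qed.

Lemma NC_mul A B : NC A -> NC B -> NC (A *m B). Proof. exact: mx_genM. Qed.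
Lemma NC_1 : NC 1%:M. Proof. exact: mx_gen1. Qed.
Lemma NC_V A B : NC A -> inv2 A B -> NC B.
Proof. by move=> h [h1 h2]; apply: (mx_genV h). Qed.

Lemma EU_Hm X Y : inEn X -> inv2 X Y -> EU (Hm X Y).
Proof. by move=> hX [h1 h2]; apply: mx_genS; left; exists X, Y. Qed.

Lemma NC_conj M g g' : NC M -> EU g -> inv2 g g' -> NC (g *m M *m g').
Proof.
move=> hM hg [e1 e2]; elim: hM => [|M0 [a [a' [h [ha h1 h2 hh ->]]]]|M0 N _ IH1 _ IH2|M0 N _ IH f1 f2].
- by rewrite mulmx1 e1; exact: NC_1.
- apply: mx_genS; exists (g *m a), (a' *m g'), h; split.
  + exact: EU_mul.
  + by rewrite !mulmxA -(mulmxA g a a') h1 mulmx1 e1.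
  + by rewrite !mulmxA -(mulmxA a' g' g) e2 mulmx1 h2.
  + by [].
  + by rewrite !mulmxA.
- have -> : g *m (M0 *m N) *m g' = (g *m M0 *m g') *m (g *m N *m g').
    by rewrite !mulmxA -(mulmxA (g *m M0) g' g) e2 mulmx1.
  exact: NC_mul.
- apply: (NC_V IH); split.
    by rewrite !mulmxA -(mulmxA (g *m M0) g' g) e2 mulmx1 -(mulmxA g M0 N) f1 mulmx1 e1.
  by rewrite !mulmxA -(mulmxA (g *m N) g' g) e2 mulmx1 -(mulmxA g N M0) f2 mulmx1 e1.
Qed.

Lemma NC_comm M M' g g' : NC M -> inv2 M M' -> EU g -> inv2 g g' ->
  NC (g *m M *m g' *m M').
Proof.
move=> hM hMM' hg hgg'; apply: NC_mul; first exact: NC_conj.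
exact: (NC_V hM).
Qed.

Lemma NC_HA X Y : in_A X -> inv2 X Y -> NC (Hm X Y).
Proof.
move=> hX [h1 h2]; apply: mx_genS; exists 1%:M, 1%:M, (Hm X Y); split.
- exact: EU_1.
- exact: mulmx1.
- exact: mulmx1.
- by exists X, Y.
- by rewrite mulmx1 mul1mx.
Qed.

Definition HNC X := exists Y, inv2 X Y /\ NC (Hm X Y).

Lemma HNC_all X Y : HNC X -> inv2 X Y -> NC (Hm X Y).
Proof. by move=> [Y0 [h0 hN]] h; rewrite -(inv2_uniq h0 h). Qed.

Lemma HNC_comm X X' G G' : HNC X -> inv2 X X' -> inEn G -> inv2 G G' ->
  HNC (G *m X *m G' *m X').
Proof.
move=> hX hXX' hG hGG'.
have hi : inv2 (G *m X *m G' *m X') (X *m (G *m (X' *m G'))).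
  apply: inv2M; last exact: inv2_sym.
  apply: inv2M; last exact: inv2_sym.
  exact: inv2M.
exists (X *m (G *m (X' *m G'))); split => //.
have := NC_comm (HNC_all hX hXX') (Hm_inv hXX') (EU_Hm hG hGG') (Hm_inv hGG').
by rewrite !HmM.
Qed.

Lemma third (p q : 'I_n) : exists i : 'I_n, i != p /\ i != q.
Proof.
have h0 : (0 < n)%N by apply: leq_trans hn.
have h1 : (1 < n)%N by apply: leq_trans hn.
pose o0 := Ordinal h0; pose o1 := Ordinal h1; pose o2 := Ordinal hn.
case: (eqVneq o0 p) => [e0|n0p]; case: (eqVneq o0 q) => [e0'|n0q].
- by exists o1; rewrite -e0 -e0'.
- case: (eqVneq o1 q) => [e1|n1q]; first by exists o2; rewrite -e0 -e1.
  by exists o1; rewrite -e0.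
- case: (eqVneq o1 p) => [e1|n1p]; first by exists o2; rewrite -e0' -e1.
  by exists o1; rewrite -e0'.
- by exists o0.
Qed.


Lemma NC_Hel p q r : p != q -> NC (Hm (el p q r) (el p q (- r))).
Proof.
move=> hpq; have [i [hip hiq]] := third p q.
have hqp : q != p by rewrite eq_sym.
pose P : 'M[R]_n := tperm_mx q p *m tperm_mx i q.
pose P' : 'M[R]_n := tperm_mx i q *m tperm_mx q p.
have hP : inv2 P P' by apply: inv2M; split; apply: tpm2.
have hA : in_A P.
  exists [:: tperm_mx q p; tperm_mx i q]; split => //.
    move=> Y; rewrite !in_cons in_nil orbF => /orP [] /eqP ->; left.
      by exists q, p.
    by exists i, q.
  by rewrite /= mulmx1.
have h0 : HNC P by exists P'; split => //; exact: NC_HA.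
have h1 := HNC_comm h0 hP (inE_el r hiq) (inv2_el r hiq).
rewrite -(mulmxA _ P) -mulmxA (H1 _ hiq hqp hip) in h1.
have hx : inv2 (el i q r *m el p i (- r)) (el p i r *m el i q (- r)).
  apply: inv2M; first exact: inv2_el.
  by rewrite -{2}(opprK r); apply: inv2_el; rewrite eq_sym.
have h2 := HNC_comm h1 hx (inE_el 1 hiq) (inv2_el 1 hiq).
rewrite H2 // in h2.
exact: HNC_all h2 (inv2_el r hpq).
Qed.

Lemma inE_inv X : inEn X -> exists Y, inv2 X Y.
Proof.
elim=> [|M [p [q [c [hpq ->]]]]|M N _ [M' hM] _ [N' hN]|M N _ _ f1 f2].
- by exists 1%:M; split; apply: mulmx1.
- by exists (el p q (- c)); rewrite elemE; apply: inv2_el.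
- by exists (N' *m M'); apply: inv2M.
- by exists M.
Qed.

Lemma NC_HE X : inEn X -> forall Y, inv2 X Y -> NC (Hm X Y).
Proof.
elim=> [|M [p [q [c [hpq ->]]]]|M N hM IH1 hN IH2|M N hM IH f1 f2] Y hY.
- have h11 : inv2 (1%:M : 'M[R]_n) 1%:M by split; apply: mulmx1.
  by rewrite -(inv2_uniq h11 hY) Hm1; apply: NC_1.
- rewrite elemE in hY *; rewrite -(inv2_uniq (inv2_el c hpq) hY).
  exact: NC_Hel.
- have [M' hM'] := inE_inv hM; have [N' hN'] := inE_inv hN.
  rewrite -(inv2_uniq (inv2M hM' hN') hY) -HmM.
  by apply: NC_mul; [apply: IH1 | apply: IH2].
- have hMN : inv2 M N by [].
  rewrite -(inv2_uniq (inv2_sym hMN) hY).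
  exact: (NC_V (IH N hMN) (Hm_inv hMN)).
Qed.


Lemma LamN x : Lam x -> Lam (- x).
Proof. by move=> h; rewrite -sub0r; apply: (fr_LamB fr); [apply: (fr_Lam0 fr)|]. Qed.

Lemma Lam_n0 : in_Lam_n star eps Lam (0 : 'M[R]_n).
Proof.
split => [i j _|i]; rewrite !mxE ?star0 ?mul0r ?oppr0 //.
exact: (fr_Lam0 fr).
Qed.

Lemma tie_sym b g : star g = - (eps * b) -> star b = - (eps * g).
Proof.
move=> h.
have : star (star g) = star (- (eps * b)) by rewrite h.
rewrite starK starN starM star_eps => h2.
have : eps * g * epsi * eps = - (star b * epsi) * eps by rewrite h2.
rewrite -mulrA epsi_eps mulr1 mulNr -mulrA epsi_eps mulr1 => ->.
by rewrite opprK.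
Qed.

Lemma tie_symL b g : b = - (star g * eps) -> g = - (star b * eps).
Proof.
move=> ->; rewrite starN starM starK star_eps mulNr opprK.
by rewrite -!mulrA epsi_eps mulr1 mulrA epsi_eps mul1r.
Qed.

Lemma hermU_short (p q : 'I_n) b g : p != q -> star g = - (eps * b) ->
  in_Lam_n star eps Lam (sm (E b p q + E g q p)).
Proof.
move=> hpq h; split => [x y hxy|x].
  rewrite !mxE; ent_split; rewrite ?addr0 ?add0r ?starK -?mulrA ?epsi_eps ?mulr1 ?star0 ?mulr0 ?mul0r ?oppr0 //.
  - exact: (tie_sym h).
rewrite !mxE; ent_split; rewrite ?addr0 ?star0; exact: (fr_Lam0 fr).
Qed.


Lemma hermU_long (p : 'I_n) b : Lam (star b) -> in_Lam_n star eps Lam (sm (E b p p)).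
Proof.
move=> h; split => [x y hxy|x].
  by rewrite !mxE; ent_split; rewrite ?star0 ?mul0r ?oppr0.
rewrite !mxE; ent_split => //; rewrite star0; exact: (fr_Lam0 fr).
Qed.

Lemma hermL_short (p q : 'I_n) b g : p != q -> b = - (star g * eps) ->
  in_Lam_n star eps Lam (E b p q + E g q p).
Proof.
move=> hpq h; split => [x y hxy|x].
  rewrite !mxE; ent_split; rewrite ?addr0 ?add0r ?star0 ?mul0r ?oppr0 //.
  exact: tie_symL.
rewrite !mxE; ent_split; rewrite ?addr0; exact: (fr_Lam0 fr).
Qed.

Lemma hermL_long (p : 'I_n) b : Lam b -> in_Lam_n star eps Lam (E b p p).
Proof.
move=> h; split => [x y hxy|x].
  by rewrite !mxE; ent_split; rewrite ?star0 ?mul0r ?oppr0.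
rewrite !mxE; ent_split => //; exact: (fr_Lam0 fr).
Qed.

Lemma EU_U b : in_Lam_n star eps Lam (sm b) -> EU (U b).
Proof.
move=> h; apply: mx_genS; right; split; last by left; exists b.
rewrite /in_U /U block_mxKul block_mxKur block_mxKdl block_mxKdr; split.
- by exists (U (- b)); exact: U_inv.
- by rewrite sm1 mulmx1 sm0 mul0mx addr0.
- by rewrite mulmx0; exact: Lam_n0.
- by rewrite mulmx1.
Qed.

Lemma EU_L c : in_Lam_n star eps Lam c -> EU (L c).
Proof.
move=> h; apply: mx_genS; right; split; last by right; exists c.
rewrite /in_U /L block_mxKul block_mxKur block_mxKdl block_mxKdr; split.
- by exists (L (- c)); exact: L_inv.
- by rewrite sm1 mulmx1 scaler0 mulmx0 addr0.
- by rewrite sm1 mul1mx.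
- by rewrite sm0 mul0mx; exact: Lam_n0.
Qed.


Lemma shortU (p q : 'I_n) b g : p != q -> star g = - (eps * b) ->
  NC (U (E b p q + E g q p)).
Proof.
move=> hpq h; have [j [hjp hjq]] := third p q.
have hpj : p != j by rewrite eq_sym.
pose b0 := E (- epsi) j q + E 1 q j.
have hb0 : in_Lam_n star eps Lam (sm b0).
  by apply: hermU_short => //; rewrite star1 mulrN opprK eps_epsi.
pose r := b * eps.
have hX := NC_Hel r hpj.
have := NC_comm hX (Hm_inv (inv2_el r hpj)) (EU_U hb0) (U_inv b0).
rewrite -(mulmxA (U b0)) -mulmxA HUH; last by case: (inv2_el r hpj).
rewrite UU sm_el; congr (NC (U _)).
rewrite /b0 /el; Eexp.
have e1 : r * - epsi = - b by rewrite mulrN /r -mulrA eps_epsi mulr1.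
have e2 : 1 * star r = - g.
  by rewrite mul1r /r starM star_eps (tie_sym h) mulrN mulrA epsi_eps mul1r.
by rewrite e1 e2; Eent.
Qed.

Lemma Lam_tie b : Lam (star b) -> star b = - (eps * b).
Proof.
move=> h; rewrite {1}((fr_Lam_max fr) _ h) starK.
by rewrite -!mulrA epsi_eps mulr1.
Qed.

Lemma longU (p : 'I_n) b : Lam (star b) -> NC (U (E b p p)).
Proof.
move=> h; have [j [hjp _]] := third p p.
have hpj : p != j by rewrite eq_sym.
pose b0 := E (- b) j j.
have hb0 : in_Lam_n star eps Lam (sm b0).
  by apply: hermU_long; rewrite starN; apply: LamN.
have hX := NC_Hel 1 hpj.
have := NC_comm hX (Hm_inv (inv2_el 1 hpj)) (EU_U hb0) (U_inv b0).
rewrite -(mulmxA (U b0)) -mulmxA HUH; last by case: (inv2_el 1 hpj).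
rewrite UU sm_el.
have -> : b0 + el p j 1 *m - b0 *m (1%:M + E (star 1) j p) =
   (E b p j + E b j p) + E b p p.
  by rewrite /b0 /el star1; Eexp; Eent.
move=> hC.
have hS : NC (U (- (E b p j + E b j p))).
  rewrite opprD -!EN; apply: shortU => //.
  by rewrite starN (Lam_tie h) mulrN.
have := NC_mul hS hC; rewrite UU.
by rewrite addrA addNr add0r.
Qed.

Lemma shortL (p q : 'I_n) b g : p != q -> b = - (star g * eps) ->
  NC (L (E b p q + E g q p)).
Proof.
move=> hpq h; have [i [hip hiq]] := third p q.
pose c0 := E 1 i q + E (- eps) q i.
have hc0 : in_Lam_n star eps Lam c0.
  apply: hermL_short => //.
  by rewrite starN star_eps mulNr epsi_eps opprK.
pose r := - (epsi * g).
have hX := NC_Hel r hip.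
have := NC_comm hX (Hm_inv (inv2_el r hip)) (EU_L hc0) (L_inv c0).
rewrite -(mulmxA (L c0)) -mulmxA HLH; last by case: (inv2_el r hip).
rewrite LL sm_el; congr (NC (L _)).
rewrite /c0 /el; Eexp.
have e1 : star (- r) * 1 = - b.
  by rewrite mulr1 /r opprK starM star_epsi h opprK.
have e2 : - eps * - r = - g by rewrite mulrNN /r mulrN mulrA eps_epsi mul1r.
by rewrite e1 e2; Eent.
Qed.

Lemma longL (p : 'I_n) b : Lam b -> NC (L (E b p p)).
Proof.
move=> h; have [j [hjp _]] := third p p.
pose c0 := E (- b) j j.
have hc0 : in_Lam_n star eps Lam c0 by apply: hermL_long; apply: LamN.
have hX := NC_Hel 1 hjp.
have := NC_comm hX (Hm_inv (inv2_el 1 hjp)) (EU_L hc0) (L_inv c0).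
rewrite -(mulmxA (L c0)) -mulmxA HLH; last by case: (inv2_el 1 hjp).
rewrite LL sm_el.
have -> : c0 + (1%:M + E (star (- 1)) p j) *m - c0 *m el j p (- 1) =
   (E (- b) p j + E (- b) j p) + E b p p.
  by rewrite /c0 /el starN star1; Eexp; Eent.
move=> hC.
have hS : NC (L (- (E (- b) p j + E (- b) j p))).
  rewrite opprD -!EN opprK; apply: shortL; first by rewrite eq_sym.
  by rewrite -{1}((fr_Lam_max fr) _ h).
have := NC_mul hS hC; rewrite LL.
by rewrite addrA addNr add0r.
Qed.

Lemma NC_big (F : 'M[R]_n -> 'M[R]_(n + n)) (f : 'I_n -> 'M[R]_n) :
  F 0 = 1%:M -> (forall a c, F (a + c) = F a *m F c) ->
  (forall i, NC (F (f i))) -> NC (F (\sum_i f i)).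
Proof.
move=> h0 hD hi; apply: (big_ind (fun M => NC (F M))).
- by rewrite h0; apply: NC_1.
- by move=> x y hx hy; rewrite hD; apply: NC_mul.
- by move=> i _; apply: hi.
Qed.

Lemma NC_Ub b : in_Lam_n star eps Lam (sm b) -> NC (U b).
Proof.
move=> [hb1 hb2]; rewrite (Tsum b).
apply: NC_big => [|a c|p]; [exact: U0 | by rewrite UU |].
apply: NC_big => [|a c|q]; [exact: U0 | by rewrite UU |].
rewrite /T; case: ifP => hlt.
  have hpq : p != q by apply/eqP => e; rewrite e ltnn in hlt.
  apply: shortU => //.
  have := hb1 p q hpq; rewrite !sm_entry starK -!mulrA epsi_eps mulr1 => ->.
  by [].
case: (eqVneq p q) => [e|hpq].
  subst q; apply: longU; have := hb2 p; rewrite sm_entry; exact.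
by rewrite U0; apply: NC_1.
Qed.

Lemma NC_Lc c : in_Lam_n star eps Lam c -> NC (L c).
Proof.
move=> [hc1 hc2]; rewrite (Tsum c).
apply: NC_big => [|a d|p]; [exact: L0 | by rewrite LL |].
apply: NC_big => [|a d|q]; [exact: L0 | by rewrite LL |].
rewrite /T; case: ifP => hlt.
  have hpq : p != q by apply/eqP => e; rewrite e ltnn in hlt.
  by apply: shortL => //; apply: hc1.
case: (eqVneq p q) => [e|hpq].
  by subst q; apply: longL; apply: hc2.
by rewrite L0; apply: NC_1.
Qed.

Lemma EU_sub M : EU M -> NC M.
Proof.
elim=> [|M0 [[X [Y [hX h1 h2 ->]]] | [hU [[b e]|[c e]]]]|M0 N _ IH1 _ IH2|M0 N _ IH f1 f2].
- exact: NC_1.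
- exact: (NC_HE hX (conj h1 h2)).
- subst M0; apply: NC_Ub.
  move: hU; rewrite /in_U block_mxKur block_mxKdr => -[_ _ _]; rewrite mulmx1; exact.
- subst M0; apply: NC_Lc.
  move: hU; rewrite /in_U block_mxKul block_mxKdl => -[_ _ +]; rewrite sm1 mul1mx; exact.
- exact: NC_mul.
- exact: (NC_V IH).
Qed.

Lemma NC_sub M : NC M -> EU M.
Proof.
elim=> [|M0 [g [g' [h [hg h1 h2 [X [Y [hX e1 e2 ->]]] ->]]]]|M0 N _ IH1 _ IH2|M0 N _ IH f1 f2].
- exact: EU_1.
- apply: EU_mul; last exact: (EU_V hg).
  apply: EU_mul => //; apply: EU_Hm; [exact: inA_E | by []].
- exact: EU_mul.
- exact: (EU_V IH).
Qed.

End Main.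

Unset Implicit Arguments.
Theorem lemma5p3 (R : pzRingType) (star : R -> R) (eps epsi : R)
    (Lam : R -> Prop) (n : nat) :
  is_form_ring star eps epsi Lam -> (3 <= n)%N ->
  forall M : 'M[R]_(n + n),
    in_EU star eps Lam M <->
    normal_closure_in (@in_EU R star eps Lam n) (in_H_of star (@in_A R n)) M.
Proof.
move=> fr hn M; split; [exact: (EU_sub fr hn) | exact: NC_sub].
Qed.
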